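(* Let $\Omega$ be an infinite compact Hausdorff space and let $\Gamma$ be a group acting on $\Omega$ by homeomorphisms, and let $n\ge 2$ be an integer. The induced action $\alpha$ of $\Gamma$ on $C(\Omega)$, $\alpha_g(f)(\omega)=f(g^{-1}\omega)$, is $n$-filling if and only if for any nonempty open subsets $U_1,\dots,U_n$ of $\Omega$ there exist $g_1,\dots,g_n\in\Gamma$ such that $g_1U_1\cup\dots\cup g_nU_n=\Omega$.
   Context: An action $\alpha$ of a group $\Gamma$ on a unital $C^*$-algebra $A$ is called $n$-filling if for all $b_1,\dots,b_n\in A^+$ with $\|b_j\|=1$ ($1\le j\le n$) and all $\epsilon>0$ there exist $g_1,\dots,g_n\in\Gamma$ such that $\sum_{j=1}^n\alpha_{g_j}(b_j)\ge 1-\epsilon$. *)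

(* Defs.v *)
From HB Require Import structures.
From mathcomp Require Import all_boot all_order all_algebra.
From mathcomp Require Import monoid.
From mathcomp Require Import all_classical all_reals topology normedtype.
From mathcomp Require Import Rstruct Rstruct_topology.
From Stdlib Require Import Rdefinitions.

Set Implicit Arguments.
Unset Strict Implicit.
Unset Printing Implicit Defensive.

Import Order.TTheory GRing.Theory Num.Theory.
Local Open Scope classical_set_scope.
Local Open Scope ring_scope.

(* An action of the group G on the topological space X by homeomorphisms:
   act 1 = id, act (g h) = act g o act h, and each act g is continuous
   (so act g is a homeomorphism with inverse act g^-1). *)
Definition is_action_by_homeos (G : groupType) (X : topologicalType)
    (act : G -> X -> X) : Prop :=
  (forall x, act (monoid.one : G) x = x) /\
  (forall g h x, act (monoid.mul g h) x = act g (act h x)) /\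
  (forall g, continuous (act g)).

(* Elements of C(X) relevant here: positive elements of C(X) are exactly the
   continuous functions X -> [0, +oo) (real valued). *)
Definition positive_elt (X : topologicalType) (b : X -> R) : Prop :=
  continuous b /\ (forall x, 0 <= b x).

Definition sup_norm (X : topologicalType) (b : X -> R) : R :=
  sup (range (fun x => `|b x|)).

Definition induced_action (G : groupType) (X : topologicalType)
    (act : G -> X -> X) (g : G) (f : X -> R) : X -> R :=
  fun w => f (act (monoid.inv g) w).

(* n-filling for the induced action on C(X): the order on self-adjoint
   elements of C(X) is the pointwise order, and 1 - eps is the constant
   function. *)
Definition n_filling (G : groupType) (X : topologicalType)
    (act : G -> X -> X) (n : nat) : Prop :=
  forall b : 'I_n -> X -> R,
    (forall j, positive_elt (b j)) ->
    (forall j, sup_norm (b j) = 1) ->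
    forall eps : R, 0 < eps ->
    exists g : 'I_n -> G,
      forall w, 1 - eps <= \sum_(j < n) induced_action act (g j) (b j) w.

Definition open_covering_property (G : groupType) (X : topologicalType)
    (act : G -> X -> X) (n : nat) : Prop :=
  forall U : 'I_n -> set X,
    (forall j, open (U j)) -> (forall j, U j !=set0) ->
    exists g : 'I_n -> G,
      \bigcup_(j in [set: 'I_n]) (act (g j) @` U j) = [set: X].

(* Main.v *)
Require Import Defs.
From HB Require Import structures.
From mathcomp Require Import all_boot all_order all_algebra.
From mathcomp Require Import monoid.
From mathcomp Require Import all_classical all_reals topology normedtype.
From mathcomp Require Import Rstruct Rstruct_topology.
From mathcomp Require Import urysohn lra.
From Stdlib Require Import Rdefinitions.

Local Open Scope classical_set_scope.

Import Order.TTheory GRing.Theory Num.Theory.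

Section Aux.
Local Open Scope ring_scope.

Lemma act_inv_l (G : groupType) (X : topologicalType) (act : G -> X -> X) :
  is_action_by_homeos act -> forall g x, act (monoid.inv g) (act g x) = x.
Proof.
move=> [h1 [hM _]] g x; rewrite -hM.
by rewrite (@monoid.mulVg G) h1.
Qed.

Lemma act_inv_r (G : groupType) (X : topologicalType) (act : G -> X -> X) :
  is_action_by_homeos act -> forall g x, act g (act (monoid.inv g) x) = x.
Proof.
move=> [h1 [hM _]] g x; rewrite -hM.
by rewrite (@monoid.mulgV G) h1.
Qed.

Lemma bump_fun (X : topologicalType) (x : X) (U : set X) :
  compact [set: X] -> hausdorff_space X -> open U -> U x ->
  exists b : X -> R, [/\ continuous b, (forall y, 0 <= b y <= 1), b x = 1 &
     (forall y, ~ U y -> b y = 0)].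
Proof.
move=> cX hX oU Ux.
have crs : completely_regular_space X.
  apply: (@normal_completely_regular R).
    exact: compact_normal.
  exact: hausdorff_accessible.
have clB : closed (~` U) by rewrite closedC.
have /(crs x _ clB) : ~ (~` U) x by move=> /(_ Ux).
move=> /(@uniform_separatorP X R) [f [cf rf f0 f1]].
exists (fun y => 1 - f y); split.
- move=> y; have h1 : {for y, continuous (cst (1:R^o))} by move=> ?; exact: cvg_cst.
  exact: (@continuousB R R^o X (cst (1:R)) f y h1 (cf y)).
- move=> y; have /= := rf (f y) (ex_intro2 _ _ y I erefl).
  rewrite in_itv /= => /andP [a b].
  by rewrite subr_ge0 b /= lerBlDr lerDl a.
- by rewrite (_ : f x = 0) ?subr0 //; apply: f0; exists x.
- move=> y Uy; have -> : f y = 1 by apply: f1; exists y.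
  by rewrite subrr.
Qed.

End Aux.


Section Aux2.
Local Open Scope ring_scope.

Lemma sup_norm_one (X : topologicalType) (b : X -> R) (x : X) :
  (forall y, 0 <= b y <= 1) -> b x = 1 -> sup_norm b = 1.
Proof.
move=> hb bx; rewrite /sup_norm; apply/eqP; rewrite eq_le; apply/andP; split.
- apply: ge_sup; first by exists `|b x|, x.
  move=> _ [y _ <-]; have /andP [h0 h1] := hb y; by rewrite ger0_norm.
- have ub : has_ubound (range (fun y => `|b y|)).
    exists 1 => _ [y _ <-]; have /andP [h0 h1] := hb y; by rewrite ger0_norm.
  have hx : range (fun y => `|b y|) `|b x| by exists x.
  have h := ub_le_sup ub hx; rewrite bx normr1 in h; exact: h.
Qed.

End Aux2.

Theorem proposition0p3 (G : groupType) (X : topologicalType)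
    (act : G -> X -> X) (n : nat) :
  compact [set: X] -> hausdorff_space X -> infinite_set [set: X] ->
  is_action_by_homeos act -> (2 <= n)%N ->
  n_filling act n <-> open_covering_property act n.
Proof.
Local Open Scope ring_scope.
move=> cX hX infX hact n2.
have [x0 _] : [set: X] !=set0.
  apply/set0P/eqP => h; apply: infX; rewrite h; exact: finite_set0.
split.
- move=> hf U oU neU.
  have /choice [b hb] : forall j : 'I_n, exists b : X -> R,
      [/\ continuous b, (forall y, (0 <= b y <= 1)), (exists x, b x = 1) &
       (forall y, ~ U j y -> b y = 0)].
    move=> j; have [x Ux] := neU j.
    have := @bump_fun X x (U j) cX hX (oU j) Ux; case=> b [cb rb bx bU].
    exists b; split => //; by exists x.
  have hpos : forall j, positive_elt (b j).
    move=> j; have [cb rb _ _] := hb j; split => // y.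
    by have /andP [] := rb y.
  have hnorm : forall j, sup_norm (b j) = 1.
    move=> j; have [cb rb [x bx] _] := hb j; exact: (@sup_norm_one X (b j) x rb bx).
  have h2 : (0 < 1/2 :> R) by rewrite divr_gt0.
  have [g hg] := hf b hpos hnorm (1/2) h2.
  exists g; apply/seteqP; split => // w _.
  apply: contrapT => nw.
  have := hg w; rewrite big1.
    by move=> h; have : (1 - 1/2 <= 0 :> R) by []; lra.
  move=> j _; rewrite /induced_action.
  have [_ _ _ bU] := hb j; apply: bU => Uu; apply: nw.
  exists j => //; exists (act (monoid.inv (g j)) w) => //.
  exact: (@act_inv_r G X act hact).
- move=> hc b hb hn eps heps.
  pose U j := [set y | (1 - eps < b j y)].
  have oU : forall j, open (U j).
    move=> j; have [cb _] := hb j.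
    have og : open [set r : R | 1 - eps < r] by exact: open_gt.
    have := @open_comp X R (b j) [set r : R | 1 - eps < r] (fun y _ => cb y) og; exact.
  have neU : forall j, U j !=set0.
    move=> j; have [_ b0] := hb j.
    have [_ [y _ <-] hy] : exists2 r, range (fun y => `|b j y|) r & (1 - eps < r).
      apply: sup_gt; first by exists `|b j x0|, x0.
      by rewrite -/(sup_norm (b j)) hn ltrBlDr ltrDl.
    by exists y; rewrite /U /= -(ger0_norm (b0 y)).
  have [g hg] := hc U oU neU.
  exists g => w.
  have : [set: X] w by [].
  rewrite -hg => -[j _ [u Uu <-]].
  rewrite (bigD1 j) //= {1}/induced_action (@act_inv_l G X act hact).
  apply: le_trans (ltW Uu) _; rewrite lerDl.
  apply: sumr_ge0 => i _; rewrite /induced_action.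
  by have [_ ->] := hb i.
Qed.
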